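(* Let $n\ge2$ and consider admissible 4-tuples $(\sigma_0,\sigma_\infty,\sigma_1,\tau)\in S_{2n}^4$. If such a tuple is special and $\sigma_1$ and $\tau$ have disjoint supports, then $\sigma_0=\prod_{i=1}^{n}(i,\,2n+1-i)$, $\sigma_1\tau=\prod_{i=1}^{n-1}(i,\,2n-i)$, and $\tau$ is one of the $n-1$ transpositions $(i,2n-i)$, $1\le i\le n-1$ (each choice giving a special tuple). Two distinct such special tuples are conjugate if and only if they are exchanged by conjugation by $\sigma_\infty^n$; such a conjugation fixes the tuple only when $n$ is even and $\tau=(n/2,\,3n/2)$. Consequently the number of conjugacy classes of admissible 4-tuples with $\sigma_1$ and $\tau$ disjoint is $\lfloor n/2\rfloor$.
   Context: Permutation products are read left to right ($\sigma\sigma'$: first $\sigma$, then $\sigma'$). An admissible 4-tuple (the case $\deg D=4$ with maximal branching, i.e. $A^2$ branched over $0,1,\infty$ and exactly one further point, $\deg A=n$) is $(\sigma_0,\sigma_\infty,\sigma_1,\tau)\in S_{2n}^4$ with $\sigma_0$ a product of $n$ disjoint transpositions, $\sigma_\infty$ a $2n$-cycle, $\sigma_1$ a product of $n-2$ disjoint transpositions, $\tau$ a transposition, and $\sigma_0\sigma_\infty\sigma_1\tau=\mathrm{id}$. Tuples $\Sigma,\Sigma'$ are conjugate if $\Sigma'=\gamma^{-1}\Sigma\gamma$ componentwise for some $\gamma\in S_{2n}$. A tuple is special if $\sigma_\infty=(2n,2n-1,\dots,1)$ (the cycle $2n\mapsto2n-1\mapsto\dots\mapsto1\mapsto2n$)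 and $\sigma_1(2n)=\tau(2n)=2n$; every conjugacy class contains special tuples. *)

(* Defs.v *)
(* Points 1..2n of the paper are the ordinals 0..2n-1 of 'I_(2*n)
   (paper label j <-> ordinal j-1).  MathComp's permutation product is read left
   to right ((s * t) x = t (s x), lemma permM), as in the paper, and
   conjugation x ^ g = g^-1 * x * g. *)
From mathcomp Require Import all_boot all_fingroup.
Set Implicit Arguments. Unset Strict Implicit. Unset Printing Implicit Defensive.
Local Open Scope group_scope.

Definition lab (m i : nat) : option 'I_m := insub i.-1.

(* the transposition (i, j) of paper labels (identity if a label is out of range) *)
Definition tpn (m i j : nat) : 'S_m :=
  match lab m i, lab m j with Some a, Some b => tperm a b | _, _ => 1 end.

Definition is_transp m (s : 'S_m) : bool :=
  [exists a : 'I_m, exists b : 'I_m, (a != b) && (s == tperm a b)].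

Definition is_prod_disj_transp m (k : nat) (s : 'S_m) : bool :=
  [exists ab : k.-tuple ('I_m * 'I_m),
     uniq (flatten [seq [:: p.1; p.2] | p <- ab]) &&
     (s == \prod_(p <- ab) tperm p.1 p.2)].

Definition is_cycle m (k : nat) (s : 'S_m) : bool :=
  [exists x, (#|porbit s x| == k) && [forall y, (y \notin porbit s x) ==> (s y == y)]].

Definition psupp m (s : 'S_m) : {set 'I_m} := [set x | s x != x].

Definition tuple4 (m : nat) := ('S_m * 'S_m * 'S_m * 'S_m)%type.
Definition sig0 m (S : tuple4 m) : 'S_m := S.1.1.1.
Definition siginf m (S : tuple4 m) : 'S_m := S.1.1.2.
Definition sig1 m (S : tuple4 m) : 'S_m := S.1.2.
Definition tau m (S : tuple4 m) : 'S_m := S.2.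

Definition admissible (n : nat) (S : tuple4 (2 * n)) : bool :=
  [&& is_prod_disj_transp n (sig0 S), is_cycle (2 * n) (siginf S),
      is_prod_disj_transp (n - 2) (sig1 S), is_transp (tau S) &
      sig0 S * siginf S * sig1 S * tau S == 1].

(* the 2n-cycle 2n -> 2n-1 -> ... -> 1 -> 2n, i.e. x |-> x - 1 mod 2n on ordinals *)
Definition sigma_inf (n : nat) : 'S_(2 * n) := perm (@ord_pred_inj (2 * n)).

Definition special (n : nat) (S : tuple4 (2 * n)) : bool :=
  [&& siginf S == sigma_inf n,
      [forall x : 'I_(2 * n), (val x == (2 * n).-1) ==> (sig1 S x == x)] &
      [forall x : 'I_(2 * n), (val x == (2 * n).-1) ==> (tau S x == x)]].

Definition disj1t m (S : tuple4 m) : bool := [disjoint psupp (sig1 S) & psupp (tau S)].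

Definition conj4 m (S : tuple4 m) (g : 'S_m) : tuple4 m :=
  (sig0 S ^ g, siginf S ^ g, sig1 S ^ g, tau S ^ g).

Definition conjugate4 m (S S' : tuple4 m) : bool := [exists g, S' == conj4 S g].

Definition conj_class m (S : tuple4 m) : {set tuple4 m} := [set S' | conjugate4 S S'].

(* Main.v *)
Require Import Defs.
From mathcomp Require Import all_boot all_fingroup zify.
Set Implicit Arguments. Unset Strict Implicit. Unset Printing Implicit Defensive.
Local Open Scope group_scope.

Lemma ordS_val m (x : 'I_m) : (ordS x : nat) = if x.+1 == m then 0 else x.+1.
Proof.
rewrite /=; case: eqP => [->|H]; first by rewrite modnn.
rewrite modn_small //; have := ltn_ord x; lia.
Qed.

Lemma ordP_val m (x : 'I_m) : (ord_pred x : nat) = if (x : nat) == 0 then m.-1 else ((x : nat)).-1.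
Proof.
have hx := ltn_ord x.
rewrite /=; case: eqP => [->|H]; first by rewrite add0n modn_small //; lia.
have -> : (x + m).-1 = (x.-1) + m by lia.
by rewrite modnDr modn_small //; lia.
Qed.

Lemma sinf_val n (x : 'I_(2*n)) :
  (sigma_inf n x : nat) = if (x : nat) == 0 then (2*n).-1 else ((x : nat)).-1.
Proof. by rewrite /sigma_inf permE ordP_val. Qed.

Lemma tpn_val m i j (x : 'I_m) : 0 < i <= m -> 0 < j <= m ->
  (tpn m i j x : nat) = if (x : nat) == i.-1 then j.-1 else if (x : nat) == j.-1 then i.-1 else (x : nat).
Proof.
move=> hi hj; rewrite /tpn /lab.
case: insubP => [a _ Ha|]; last by move=> /negP; case; lia.
case: insubP => [b _ Hb|]; last by move=> /negP; case; lia.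
case: tpermP => [->|->|H1 H2]; rewrite ?Ha ?Hb ?eqxx //.
  by case: eqP.
case: eqP => E1; first by case: H1; apply: val_inj; rewrite Ha.
case: eqP => E2; first by case: H2; apply: val_inj; rewrite Hb.
by [].
Qed.

Lemma ovi m (x y : 'I_m) : (x : nat) = (y : nat) -> x = y.
Proof. exact: val_inj. Qed.


Lemma prodtpn_val m c k (x : 'I_m) : 2 * k < c -> c <= m.+1 ->
  (((\prod_(1 <= i < k.+1) tpn m i (c - i))%g x) : nat) =
  if ((x : nat) < k) || ((c - 1 - k <= (x : nat)) && ((x : nat) < c - 1)) then c - 2 - (x : nat) else (x : nat).
Proof.
elim: k => [|k IH] hk hc.
  by rewrite big_geq // perm1; case: ifP => //; lia.
rewrite big_nat_recr //= permM tpn_val; [|lia|lia].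
rewrite IH; [|lia|lia].
have := ltn_ord x.
repeat case: ifP; move=> *; try lia.

Qed.


Lemma tperm_val m (a b x : 'I_m) :
  (tperm a b x : nat) = if (x : nat) == a then (b : nat) else if (x : nat) == b then (a : nat) else x.
Proof.
case: tpermP => [->|->|H1 H2]; rewrite ?eqxx //; first by case: eqP.
case: eqP => E1; first by case: H1; apply: val_inj.
by case: eqP => E2 //; case: H2; apply: val_inj.
Qed.

Definition P0d n : 'S_(2 * n) := \prod_(1 <= i < n.+1) tpn (2 * n) i (2 * n + 1 - i).
Definition P1d n : 'S_(2 * n) := \prod_(1 <= i < n) tpn (2 * n) i (2 * n - i).

Lemma P0_val n (x : 'I_(2 * n)) : (P0d n x : nat) = 2 * n - 1 - x.
Proof.
rewrite /P0d prodtpn_val; [|lia|lia].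
have := ltn_ord x; case: ifP; lia.
Qed.

Lemma P1_val n (x : 'I_(2 * n)) : 1 <= n ->
  (P1d n x : nat) = if ((x : nat) == n.-1) || ((x : nat) == (2 * n).-1) then (x : nat) else 2 * n - 2 - x.
Proof.
move=> hn; rewrite /P1d.
case: n hn x => [//|k] _ x.
rewrite prodtpn_val; [|lia|lia].
have := ltn_ord x; repeat case: ifP; lia.
Qed.

Definition prodl m (l : seq ('I_m * 'I_m)) : 'S_m := \prod_(p <- l) tperm p.1 p.2.

Lemma prodl_out m (l : seq ('I_m * 'I_m)) y :
  y \notin flatten [seq [:: p.1; p.2] | p <- l] -> prodl l y = y.
Proof.
elim: l => [|[a b] l IH]; first by rewrite /prodl big_nil perm1.
rewrite /prodl big_cons /= !inE negb_or negb_or => /andP[Ha /andP[Hb Hl]].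
by rewrite permM tpermD 1?eq_sym //; apply: IH.
Qed.

Lemma prodl_inv m (l : seq ('I_m * 'I_m)) x :
  uniq (flatten [seq [:: p.1; p.2] | p <- l]) -> prodl l (prodl l x) = x.
Proof.
elim: l x => [|[a b] l IH] x; first by rewrite /prodl big_nil !perm1.
rewrite /= !inE negb_or => /andP[/andP[ab Ha] /andP[Hb Hu]].
have Pa : prodl l a = a by apply: prodl_out.
have Pb : prodl l b = b by apply: prodl_out.
rewrite /prodl big_cons -/(prodl l) !permM.
have Hc : forall y, (prodl l y == a) = (y == a).
  by move=> y; rewrite -{1}Pa (inj_eq perm_inj).
have Hd : forall y, (prodl l y == b) = (y == b).
  by move=> y; rewrite -{1}Pb (inj_eq perm_inj).
case: (tpermP a b x) => [->|->|H1 H2].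
- by rewrite Pb tpermR Pa.
- by rewrite Pa tpermL Pb.
- rewrite tpermD ?IH //.
  + by rewrite eq_sym Hc; apply/eqP.
  + by rewrite eq_sym Hd; apply/eqP.
Qed.

Lemma prodl_supp m (l : seq ('I_m * 'I_m)) x :
  uniq (flatten [seq [:: p.1; p.2] | p <- l]) -> (prodl l x != x) = (x \in flatten [seq [:: p.1; p.2] | p <- l]).
Proof.
elim: l x => [|[a b] l IH] x; first by rewrite /prodl big_nil !perm1 eqxx.
rewrite /= !inE negb_or => /andP[/andP[ab Ha] /andP[Hb Hu]].
have Pa : prodl l a = a by apply: prodl_out.
have Pb : prodl l b = b by apply: prodl_out.
rewrite /prodl big_cons -/(prodl l) !permM.
case: (tpermP a b x) => [->|->|H1 H2].
- by rewrite Pb eqxx /= eq_sym.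
- by rewrite Pa eqxx orbT /= .
- rewrite IH //. by rewrite (introF eqP H1) (introF eqP H2).
Qed.

Lemma size_flat2 m (l : seq ('I_m * 'I_m)) : size (flatten [seq [:: p.1; p.2] | p <- l]) = (size l).*2.
Proof. by elim: l => //= p l ->; rewrite doubleS. Qed.

Lemma pdt_fwd m k (s : 'S_m) : is_prod_disj_transp k s ->
  (forall x, s (s x) = x) /\ #|psupp s| = k.*2.
Proof.
case/existsP=> ab /andP[Hu /eqP ->].
have -> : \prod_(p <- ab) tperm p.1 p.2 = prodl ab by [].
split; first by move=> x; apply: prodl_inv.
have -> : psupp (prodl ab) = [set x in flatten [seq [:: p.1; p.2] | p <- ab]].
  by apply/setP => x; rewrite !inE prodl_supp.
by rewrite cardsE (card_uniqP Hu) size_flat2 size_tuple.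
Qed.


Lemma pdt_bwd_seq m k (s : 'S_m) : (forall x, s (s x) = x) -> #|psupp s| = k.*2 ->
  exists l : seq ('I_m * 'I_m), [/\ size l = k, uniq (flatten [seq [:: p.1; p.2] | p <- l]) & s = prodl l].
Proof.
elim: k s => [|k IH] s Hi Hc.
  exists [::]; split => //; rewrite /prodl big_nil; apply/permP => x; rewrite perm1.
  apply/eqP; apply: contraT => H.
  have Hx : x \in psupp s by rewrite inE.
  have : 0 < #|psupp s| by apply/card_gt0P; exists x.
  by rewrite Hc.
have : 0 < #|psupp s| by rewrite Hc.
case/card_gt0P => a; rewrite inE => Ha.
set b := s a.
have hb : s b = a by rewrite /b Hi.
set s' := tperm a b * s.
have s'a : s' a = a by rewrite /s' permM tpermL.
have s'b : s' b = b by rewrite /s' permM tpermR.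
have s'o : forall x, x != a -> x != b -> s' x = s x.
  by move=> x H1 H2; rewrite /s' permM tpermD // eq_sym.
have Hi' : forall x, s' (s' x) = x.
  move=> x; case: (eqVneq x a) => [->|Hxa]; first by rewrite !s'a.
  case: (eqVneq x b) => [->|Hxb]; first by rewrite !s'b.
  rewrite (s'o x) // s'o ?Hi //.
    by apply/eqP => E; move: Hxb; rewrite /b -E Hi eqxx.
  by apply/eqP => E; move: Hxa; rewrite -hb -E Hi eqxx.
have Hsupp : psupp s' = psupp s :\: [set a; b].
  apply/setP => x; rewrite !inE.
  case: (eqVneq x a) => [->|Hxa]; first by rewrite s'a eqxx.
  case: (eqVneq x b) => [->|Hxb]; first by rewrite s'b eqxx.
  by rewrite s'o.
have Hab : a != b by rewrite eq_sym.
have Hc' : #|psupp s'| = k.*2.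
  rewrite Hsupp cardsD.
  have -> : psupp s :&: [set a; b] = [set a; b].
    apply/setIidPr/subsetP => x; rewrite !inE => /orP[] /eqP ->; rewrite ?hb eq_sym //.
  rewrite Hc cards2 Hab; lia.
case: (IH s' Hi' Hc') => l [Hs Hu Hl].
exists ((a, b) :: l); split => //=; first by rewrite Hs.
  rewrite inE negb_or Hab Hu andbT /=.
  have Hn : forall y, y \in flatten [seq [:: p.1; p.2] | p <- l] -> s' y != y.
    by move=> y; rewrite Hl prodl_supp.
  apply/andP; split; apply/negP => /Hn; rewrite ?s'a ?s'b eqxx //.
rewrite /prodl big_cons -/(prodl l) -Hl /s' mulgA tperm2 mul1g //.
Qed.

Lemma pdt_bwd m k (s : 'S_m) : (forall x, s (s x) = x) -> #|psupp s| = k.*2 ->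
  is_prod_disj_transp k s.
Proof.
move=> Hi Hc; case: (pdt_bwd_seq Hi Hc) => l [Hs Hu Hl].
have Hs' : size l == k by rewrite Hs.
apply/existsP; exists (Tuple Hs'); rewrite /= Hu /=; apply/eqP; exact: Hl.
Qed.


Lemma sinfE n (x : 'I_(2*n)) : sigma_inf n x = ord_pred x.
Proof. by rewrite /sigma_inf permE. Qed.

Lemma prod4_pt m (A B C D : 'S_m) : A * B * C * D = 1 -> forall x, D (C (B (A x))) = x.
Proof. by move=> H x; have := congr1 (fun p : 'S_m => p x) H; rewrite !permM perm1. Qed.

Lemma transpP m (s : 'S_m) : is_transp s -> exists2 ab : 'I_m * 'I_m, ab.1 != ab.2 & s = tperm ab.1 ab.2.
Proof. by case/existsP=> a /existsP[b /andP[ab /eqP ->]]; exists (a, b). Qed.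

Lemma disj_pt m (S : tuple4 m) : disj1t S -> forall y, (sig1 S y == y) || (tau S y == y).
Proof.
move=> Hd y; move/disjoint_setI0/setP/(_ y): Hd; rewrite !inE.
by case: eqP; case: eqP.
Qed.

Lemma rho_closed n (r : 'S_(2*n)) (top : 'I_(2*n)) : 2 <= n -> (top : nat) = (2*n).-1 ->
  r top = top -> (forall y, r (ordS y) = ord_pred (r y)) ->
  forall y : 'I_(2*n), (r y : nat) = if ((y : nat) == n.-1) || ((y : nat) == (2 * n).-1) then (y : nat) else 2 * n - 2 - y.
Proof.
move=> hn Htop Rt Rec.
suff H : forall k (y : 'I_(2*n)), (y : nat) = k -> (r y : nat) = if (k == n.-1) || (k == (2 * n).-1) then k else 2 * n - 2 - k.
  by move=> y; rewrite (H (y : nat) y).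
elim=> [|k IH] y Hy.
  have -> : y = ordS top by apply: ovi; rewrite ordS_val Htop; case: ifP; lia.
  rewrite Rec Rt ordP_val Htop; case: ifP; case: ifP; lia.
have Ey : y = ordS (ord_pred y) by rewrite ord_predK.
rewrite Ey Rec ordP_val (IH (ord_pred y)); last by rewrite ordP_val Hy.
have := ltn_ord y; repeat case: ifP; lia.
Qed.

Lemma good_struct n (S : tuple4 (2*n)) : 2 <= n -> admissible S -> special S -> disj1t S ->
  [/\ sig0 S = P0d n, sig1 S * tau S = P1d n &
      exists2 i, 1 <= i < n & tau S = tpn (2*n) i (2*n - i)].
Proof.
move=> hn /and5P[H0 Hc H1 Ht /eqP Hprod] /and3P[/eqP Hinf /forallP Hs1 /forallP Ht1] Hd.
have [I0 _] := pdt_fwd H0.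
have [I1 _] := pdt_fwd H1.
have [[a b] /= ab Htau] := transpP Ht.
have It : forall y, tau S (tau S y) = y by move=> y; rewrite Htau tpermK.
have D := disj_pt Hd.
have Cm : forall y, tau S (sig1 S y) = sig1 S (tau S y).
  move=> y; case/orP: (D y) => /eqP E.
    rewrite E; case/orP: (D (tau S y)) => /eqP E2; first by rewrite E2.
    have E3 : tau S y = y by rewrite -{1}E2 It.
    by rewrite E3 E.
  rewrite E; case/orP: (D (sig1 S y)) => /eqP E2; last by rewrite E2.
  have E3 : sig1 S y = y by rewrite -{1}E2 I1.
  by rewrite E3 E.
set rho := sig1 S * tau S.
have rE : forall x, rho x = tau S (sig1 S x) by move=> x; rewrite permM.
have Ir : forall x, rho (rho x) = x by move=> x; rewrite !rE -Cm I1 It.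
have Eq : forall x, rho (ord_pred (sig0 S x)) = x.
  by move=> x; rewrite rE -sinfE -Hinf; apply: prod4_pt.
have E0 : forall x, sig0 S x = ordS (rho x).
  by move=> x; rewrite -{2}(Eq x) Ir ord_predK.
have Rec : forall y, rho (ordS y) = ord_pred (rho y).
  move=> y.
  have := I0 (rho y); rewrite (E0 (rho y)) Ir E0 => /(congr1 (@ord_pred _)).
  by rewrite ordSK.
have htop : (2*n).-1 < 2*n by lia.
pose top := Ordinal htop.
have Rt : rho top = top.
  rewrite rE; have /eqP -> := (implyP (Hs1 top) (eqxx _)).
  by have /eqP -> := (implyP (Ht1 top) (eqxx _)).
have Rv := @rho_closed n rho top hn (erefl _) Rt Rec.
split.
- apply/permP => x; apply: ovi; rewrite /= E0 P0_val ordS_val Rv.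
  have := ltn_ord x; repeat case: ifP; lia.
- apply/permP => x; apply: ovi; rewrite /= -/rho Rv P1_val; last by lia.
  by [].
- have ta : tau S top = top by have /eqP -> := (implyP (Ht1 top) (eqxx _)).
  have Ha : a != top.
    by apply/eqP => E; move: ta; rewrite Htau -E tpermL => Eb; move: ab; rewrite Eb E eqxx.
  have Hb : b != top.
    by apply/eqP => E; move: ta; rewrite Htau -E tpermR => Eb; move: ab; rewrite Eb E eqxx.
  have s1a : sig1 S a = a.
    case/orP: (D a) => /eqP // E; move: E; rewrite Htau tpermL => E.
    by move: ab; rewrite E eqxx.
  have rab : (rho a : nat) = b by rewrite rE s1a Htau tpermL.
  move: rab; rewrite Rv => rab.
  have va : (a : nat) != (top : nat) by [].
  have vb : (b : nat) != (top : nat) by [].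
  have vab : (a : nat) != (b : nat) by [].
  move: va vb vab rab; rewrite /=.
  have := ltn_ord a; have := ltn_ord b.
  case: ifP => Hif Ha' Hb' va vb vab rab.
    by exfalso; move: vab; rewrite -rab eqxx.
  case: (ltnP a b) => Hlt.
  + exists a.+1; first by lia.
    apply/permP => x; apply: ovi; rewrite Htau tperm_val tpn_val; [|lia|lia].
    have := ltn_ord x; repeat case: ifP; lia.
  + exists b.+1; first by lia.
    apply/permP => x; apply: ovi; rewrite Htau tperm_val tpn_val; [|lia|lia].
    have := ltn_ord x; repeat case: ifP; lia.
Qed.


Definition taui n i : 'S_(2*n) := tpn (2*n) i (2*n - i).
Definition Tt n i : tuple4 (2*n) := (P0d n, sigma_inf n, P1d n * taui n i, taui n i).

Lemma taui_val n i (x : 'I_(2*n)) : 1 <= i < n ->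
  (taui n i x : nat) = if (x : nat) == i.-1 then 2*n - i - 1 else if (x : nat) == 2*n - i - 1 then i.-1 else x.
Proof. move=> hi; rewrite /taui tpn_val; [|lia|lia]. by have -> : (2*n - i).-1 = 2*n-i-1 by lia. Qed.

Lemma sinf_pow n k (x : 'I_(2*n)) : k <= x -> ((sigma_inf n ^+ k) x : nat) = x - k.
Proof.
elim: k => [|k IH] hk; first by rewrite expg0 perm1 subn0.
rewrite expgSr permM sinf_val IH; last by lia.
case: ifP; lia.
Qed.

Lemma cycle_sinf n : 1 <= n -> is_cycle (2*n) (sigma_inf n).
Proof.
move=> hn.
have htop : (2*n).-1 < 2*n by lia.
pose top := Ordinal htop.
have Hall : forall y, y \in porbit (sigma_inf n) top.
  move=> y; apply/porbitP; exists ((2*n).-1 - y); apply: ovi.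
  rewrite sinf_pow /=; have := ltn_ord y; lia.
apply/existsP; exists top; apply/andP; split.
  have -> : porbit (sigma_inf n) top = [set: 'I_(2*n)] by apply/setP => y; rewrite inE Hall.
  by rewrite cardsT card_ord.
by apply/forallP => y; rewrite Hall.
Qed.

Lemma invol_P0 n (x : 'I_(2*n)) : P0d n (P0d n x) = x.
Proof. apply: ovi; rewrite !P0_val; have := ltn_ord x; lia. Qed.

Lemma pdt_P0 n : is_prod_disj_transp n (P0d n).
Proof.
apply: pdt_bwd; first exact: invol_P0.
have -> : psupp (P0d n) = [set: 'I_(2*n)].
  apply/setP => x; rewrite !inE; apply/eqP => E.
  have := congr1 (@nat_of_ord _) E; rewrite P0_val; have := ltn_ord x; lia.
by rewrite cardsT card_ord; lia.
Qed.


Lemma rem_pair m (s : 'S_m) (a : 'I_m) : (forall x, s (s x) = x) -> s a != a ->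
  [/\ forall x, (s * tperm a (s a)) ((s * tperm a (s a)) x) = x,
      (s * tperm a (s a)) a = a, (s * tperm a (s a)) (s a) = s a &
      #|psupp (s * tperm a (s a))| = #|psupp s| - 2].
Proof.
move=> Hi Ha; set b := s a.
have hb : s b = a by rewrite /b Hi.
set s' := s * tperm a b.
have s'a : s' a = a by rewrite /s' permM tpermR.
have s'b : s' b = b by rewrite /s' permM hb tpermL.
have s'o : forall x, x != a -> x != b -> s' x = s x.
  move=> x H1 H2; rewrite /s' permM tpermD //.
    by apply/eqP => E; move: H2; rewrite /b E Hi eqxx.
  by apply/eqP => E; move: H1; rewrite -hb E Hi eqxx.
have Hi' : forall x, s' (s' x) = x.
  move=> x; case: (eqVneq x a) => [->|Hxa]; first by rewrite !s'a.
  case: (eqVneq x b) => [->|Hxb]; first by rewrite !s'b.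
  rewrite (s'o x) // s'o ?Hi //.
    by apply/eqP => E; move: Hxb; rewrite /b -E Hi eqxx.
  by apply/eqP => E; move: Hxa; rewrite -hb -E Hi eqxx.
have Hsupp : psupp s' = psupp s :\: [set a; b].
  apply/setP => x; rewrite !inE.
  case: (eqVneq x a) => [->|Hxa]; first by rewrite s'a eqxx.
  case: (eqVneq x b) => [->|Hxb]; first by rewrite s'b eqxx.
  by rewrite s'o.
have Hab : a != b by rewrite eq_sym.
split => //.
rewrite Hsupp cardsD.
have -> : psupp s :&: [set a; b] = [set a; b].
  apply/setIidPr/subsetP => x; rewrite !inE => /orP[] /eqP ->; rewrite ?hb eq_sym //.
by rewrite cards2 Hab.
Qed.

Lemma good_Tt n i : 2 <= n -> 1 <= i < n ->
  [&& admissible (Tt n i), special (Tt n i) & disj1t (Tt n i)].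
Proof.
move=> hn hi.
have pv := fun x => @P1_val n x (ltnW hn).
have hu : n.-1 < 2*n by lia.
have hv : (2*n).-1 < 2*n by lia.
have ha : i.-1 < 2*n by lia.
have hb : 2*n-i-1 < 2*n by lia.
pose u := Ordinal hu; pose v := Ordinal hv; pose a := Ordinal ha; pose b := Ordinal hb.
have P1a : P1d n a = b by apply: ovi; rewrite pv /=; case: ifP; lia.
have Et : taui n i = tperm a b.
  apply/permP => x; apply: ovi; rewrite taui_val // tperm_val /=; repeat case: ifP; lia.
have P1i : forall x, P1d n (P1d n x) = x.
  move=> x; apply: ovi; rewrite pv; move: (pv x); move: (nat_of_ord (P1d n x)) => y Hy.
  move: Hy; have := ltn_ord x; case: ifP => C1; case: ifP => C2; lia.
have P1a' : P1d n a != a by rewrite P1a -val_eqE /=; apply/eqP; lia.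
have [Qi Qa Qb Qc] := rem_pair P1i P1a'.
rewrite P1a in Qi Qa Qb Qc.
have Hs1 : #|psupp (P1d n)| = (2*n) - 2.
  have -> : psupp (P1d n) = ~: [set u; v].
    apply/setP => x; rewrite !inE -!val_eqE /= pv.
    have := ltn_ord x; case: ifP; lia.
  by rewrite cardsCs setCK card_ord cards2 -val_eqE /=; have -> : (n.-1 != (2*n).-1) by apply/eqP; lia.
have Qtop : (P1d n * tperm a b) v = v.
  rewrite permM; have -> : P1d n v = v by apply: ovi; rewrite pv /= eqxx orbT.
  by rewrite tpermD // -val_eqE /=; apply/eqP; lia.
have Ttop : tperm a b v = v by rewrite tpermD // -val_eqE /=; apply/eqP; lia.
rewrite /Tt Et.
apply/and3P; split; last first.
- rewrite /disj1t -setI_eq0; apply/eqP/setP => x; rewrite !inE /=.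
  by case: tpermP => [->|->|]; rewrite ?Qa ?Qb ?eqxx ?andbF // => H1 H2; apply/negP => /andP[_ /eqP].
- apply/and3P; split => //; apply/forallP => x; apply/implyP => Hx;
    have -> : x = v by apply: ovi; apply/eqP.
    by rewrite /= Qtop.
  by rewrite /= Ttop.
apply/and5P; split.
- exact: pdt_P0.
- exact: (cycle_sinf (ltnW hn)).
- apply: pdt_bwd => //=; rewrite Qc Hs1; lia.
- apply/existsP; exists a; apply/existsP; exists b; rewrite eqxx andbT -val_eqE /=.
  by apply/eqP; lia.
- rewrite /= !mulgA -(mulgA _ (tperm a b) (tperm a b)) tperm2 mulg1.
  apply/eqP/permP => x; apply: ovi; rewrite !permM perm1 pv sinf_val P0_val.
  have := ltn_ord x; repeat case: ifP; lia.
Qed.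


Lemma conj_pt m (s s' g : 'S_m) : (forall y, s' (g y) = g (s y)) -> s ^ g = s'.
Proof.
move=> H; apply/permP => x; rewrite conjgE !permM.
by rewrite -{2}(permKV g x) H.
Qed.

Lemma conj_ptE m (s g : 'S_m) y : (s ^ g) (g y) = g (s y).
Proof. by rewrite conjgE !permM permK. Qed.

Lemma conj_fixE m (s g : 'S_m) x : ((s ^ g) x == x) = (s (g^-1 x) == g^-1 x).
Proof.
have := conj_ptE s g (g^-1 x); rewrite permKV => ->.
by rewrite -{2}(permKV g x) (inj_eq perm_inj).
Qed.

Lemma psupp_conj m (s g : 'S_m) : #|psupp (s ^ g)| = #|psupp s|.
Proof.
have -> : psupp (s ^ g) = (g^-1) @^-1: psupp s by apply/setP => x; rewrite !inE conj_fixE.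
by rewrite card_preimset //; apply: perm_inj.
Qed.

Lemma conj4_comp m (S : tuple4 m) g h : conj4 (conj4 S g) h = conj4 S (g * h).
Proof. by rewrite /conj4 /= !conjgM. Qed.

Lemma conj4_1 m (S : tuple4 m) : conj4 S 1 = S.
Proof. by case: S => [[[a b] c] d]; rewrite /conj4 /= !conjg1. Qed.

Lemma conjugate4_refl m (S : tuple4 m) : conjugate4 S S.
Proof. by apply/existsP; exists 1; rewrite conj4_1. Qed.

Lemma inclass m (S X : tuple4 m) : (X \in conj_class S) = conjugate4 S X.
Proof. exact: (in_set (conjugate4 S) X). Qed.

Lemma class_eq m (S S' : tuple4 m) : conjugate4 S S' -> conj_class S = conj_class S'.
Proof.
case/existsP => g /eqP E.
rewrite /conj_class; apply: eq_finset => X.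
apply/existsP/existsP => [[h /eqP ->]|[h /eqP ->]].
  by exists (g^-1 * h); rewrite E conj4_comp mulgA mulgV mul1g.
by exists (g * h); rewrite E conj4_comp.
Qed.

Lemma sinf_powg n k (x : 'I_(2*n)) : k <= 2*n ->
  ((sigma_inf n ^+ k) x : nat) = if k <= x then x - k else x + 2*n - k.
Proof.
elim: k => [|k IH] hk; first by rewrite expg0 perm1 subn0.
rewrite expgSr permM sinf_val IH; last by lia.
have := ltn_ord x; repeat case: ifP; lia.
Qed.

Lemma sinf_comm n k (y : 'I_(2*n)) : sigma_inf n ((sigma_inf n ^+ k) y) = (sigma_inf n ^+ k) (sigma_inf n y).
Proof. by rewrite -!permM -expgS -expgSr. Qed.

Lemma taui_inj n i j : 1 <= i < n -> 1 <= j < n -> taui n i = taui n j -> i = j.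
Proof.
move=> hi hj E.
have ha : i.-1 < 2*n by lia.
have := congr1 (fun p : 'S_(2*n) => (p (Ordinal ha) : nat)) E.
rewrite /= !taui_val //=; repeat case: ifP; lia.
Qed.

Lemma P1_fix n x : 1 <= n -> P1d n x = x -> ((x : nat) == n.-1) || ((x : nat) == (2*n).-1).
Proof.
move=> hn /(congr1 (@nat_of_ord _)); rewrite P1_val //; have := ltn_ord x; case: ifP; lia.
Qed.

Lemma conjT n i : 2 <= n -> 1 <= i < n -> conj4 (Tt n i) (sigma_inf n ^+ n) = Tt n (n - i).
Proof.
move=> hn hi.
have gv : forall y, ((sigma_inf n ^+ n) y : nat) = if n <= y then y - n else y + 2*n - n.
  by move=> y; rewrite sinf_powg //; lia.
have pv := fun x => @P1_val n x (ltnW hn).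
have hi' : 1 <= n - i < n by lia.
have eP0 : P0d n ^ (sigma_inf n ^+ n) = P0d n.
  apply: conj_pt => y; apply: ovi; rewrite !P0_val !gv P0_val; have := ltn_ord y; repeat case: ifP; lia.
have eP1 : P1d n ^ (sigma_inf n ^+ n) = P1d n.
  apply: conj_pt => y; apply: ovi; rewrite !pv !gv pv; have := ltn_ord y; repeat case: ifP; lia.
have et : taui n i ^ (sigma_inf n ^+ n) = taui n (n - i).
  apply: conj_pt => y; apply: ovi; rewrite !taui_val // !gv taui_val //.
  have := ltn_ord y; repeat case: ifP; lia.
have es : sigma_inf n ^ (sigma_inf n ^+ n) = sigma_inf n.
  by apply: conj_pt => y; rewrite sinf_comm.
by rewrite /conj4 /Tt /= conjMg eP0 eP1 et es.
Qed.

Lemma good_eq n (S : tuple4 (2*n)) : 2 <= n -> [&& admissible S, special S & disj1t S] ->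
  exists2 i, 1 <= i < n & S = Tt n i.
Proof.
move=> hn /and3P[Ha Hs Hd].
have [E0 E1 [i hi Et]] := good_struct hn Ha Hs Hd.
exists i => //.
case/and3P: Hs => /eqP Ei _ _.
have tt : taui n i * taui n i = 1.
  apply/permP => x; apply: ovi; rewrite permM perm1 !taui_val //; have := ltn_ord x; repeat case: ifP; lia.
have E1' : sig1 S = P1d n * taui n i by rewrite -E1 Et -mulgA tt mulg1.
have -> : S = (sig0 S, siginf S, sig1 S, tau S) by case: S {Ha Hd E0 E1 Et Ei E1'} => [[[]]].
by rewrite E0 Ei E1' Et.
Qed.


Lemma det_top n (g h : 'S_(2*n)) (top : 'I_(2*n)) : (top : nat) = (2*n).-1 ->
  (forall y, g (ordS y) = ordS (g y)) -> (forall y, h (ordS y) = ordS (h y)) ->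
  g top = h top -> g = h.
Proof.
move=> Ht Hg Hh E.
have E0 : forall y : 'I_(2*n), (y : nat) = 0 -> g y = h y.
  move=> y Hy; have -> : y = ordS top by apply: ovi; rewrite ordS_val Ht; case: ifP; have := ltn_ord y; lia.
  by rewrite Hg Hh E.
suff H : forall k (y : 'I_(2*n)), (y : nat) = k -> g y = h y by apply/permP => y; apply: (H y).
elim=> [|k IH] y Hy; first exact: E0.
have Ey : y = ordS (ord_pred y) by rewrite ord_predK.
rewrite Ey Hg Hh (IH (ord_pred y)) //; by rewrite ordP_val Hy.
Qed.

Lemma comm_ordS n (g : 'S_(2*n)) : (forall y, g (sigma_inf n y) = sigma_inf n (g y)) ->
  forall y, g (ordS y) = ordS (g y).
Proof.
move=> H y; have := H (ordS y); rewrite !sinfE ordSK => E.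
by rewrite -[g (ordS y)]ord_predK -E.
Qed.

Definition goodb n (S : tuple4 (2*n)) := [&& admissible S, special S & disj1t S].

Lemma part3 n (S S' : tuple4 (2*n)) : 2 <= n -> goodb S -> goodb S' -> S <> S' ->
  (conjugate4 S S' <-> S' = conj4 S (sigma_inf n ^+ n)).
Proof.
move=> hn GS GS' Hne; split; last by move=> ->; apply/existsP; exists (sigma_inf n ^+ n).
case/existsP => g /eqP E.
have [i hi ES] := good_eq hn GS; have [j hj ES'] := good_eq hn GS'.
rewrite ES' ES in E.
have Es : sigma_inf n ^ g = sigma_inf n by move: (congr1 (@siginf _) E) => /= /esym.
have Et : taui n i ^ g = taui n j by move: (congr1 (@tau _) E) => /= /esym.
have Ep : P1d n ^ g = P1d n.
  by move: (congr1 (@sig1 _) E); rewrite /sig1 /= conjMg Et => /mulIg /esym ->.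
have Cs : forall y, g (sigma_inf n y) = sigma_inf n (g y) by move=> y; rewrite -{2}Es conj_ptE.
have Cp : forall y, P1d n (g y) = g (P1d n y) by move=> y; rewrite -{1}Ep conj_ptE.
have htop : (2*n).-1 < 2*n by lia.
pose top := Ordinal htop.
have Ptop : P1d n top = top by apply: ovi; rewrite P1_val /= ?eqxx ?orbT //; lia.
have := P1_fix (ltnW hn) (etrans (Cp top) (congr1 g Ptop)).
case/orP => /eqP Hgt.
- have Hg : g = sigma_inf n ^+ n.
    apply: (@det_top n _ _ top) => //; first exact: comm_ordS.
      by apply: comm_ordS => y; rewrite sinf_comm.
    by apply: ovi; rewrite Hgt sinf_powg /=; [case: ifP; lia | lia].
  by rewrite ES' ES E Hg.
- have Hg : g = 1.
    apply: (@det_top n _ _ top) => //; first exact: comm_ordS.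
      by move=> y; rewrite !perm1.
    by apply: ovi; rewrite Hgt perm1.
  by exfalso; apply: Hne; rewrite ES ES' E Hg conj4_1.
Qed.

Lemma part4 n (S : tuple4 (2*n)) : 2 <= n -> goodb S ->
  (conj4 S (sigma_inf n ^+ n) = S <-> ~~ odd n /\ tau S = tpn (2 * n) n./2 (3 * n./2)).
Proof.
move=> hn GS; have [i hi ->] := good_eq hn GS.
rewrite conjT //.
have h2 := odd_double_half n.
split.
- move=> /(congr1 (@tau _)) /= /taui_inj E.
  have Ei : n - i = i by apply: E; lia.
  have Hn : n = i.*2 by lia.
  have Hh : n./2 = i by rewrite Hn doubleK.
  rewrite Hh; split; first by rewrite Hn odd_double.
  by rewrite /tau /= /taui; congr tpn; lia.
- case=> Ho Ht.
  move: h2; rewrite (negbTE Ho) add0n => h2.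
  have Ht' : taui n i = taui n n./2 by rewrite [LHS]Ht /taui; congr tpn; lia.
  have Ei : i = n./2 by apply: taui_inj Ht'; lia.
  by have -> : n - i = i by lia.
Qed.


Lemma cycle_conj n (s : 'S_(2*n)) : is_cycle (2*n) s -> exists g, s ^ g = sigma_inf n.
Proof.
case/existsP => x0 /andP[/eqP Hc _].
pose h (j : 'I_(2*n)) : 'I_(2*n) := iter ((2*n).-1 - j) s x0.
have hinj : injective h.
  move=> j1 j2 E.
  have U := uniq_traject_porbit s x0; rewrite Hc in U.
  have := @nth_uniq _ x0 (traject s x0 (2*n)) ((2*n).-1 - j1) ((2*n).-1 - j2).
  rewrite size_traject !nth_traject; [|have := ltn_ord j1; lia|have := ltn_ord j2; lia].
  rewrite /h in E; rewrite E eqxx => /(_ _ _ U) H.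
  apply: ovi; move: H; have := ltn_ord j1; have := ltn_ord j2.
  move=> ? ? H; have := H ltac:(lia) ltac:(lia); lia.
pose H := perm hinj.
exists H^-1; apply: conj_pt => y.
rewrite -(permKV H y); move: (H^-1 y) => z; rewrite permK.
apply: (@perm_inj _ H); rewrite permKV !permE /h ?sinfE ordP_val.
have := ltn_ord z; case: ifP => Hz Hlt.
  rewrite subnn /= -iterS.
  have -> : ((2*n).-1 - z).+1 = #|porbit s x0| by rewrite Hc; lia.
  by rewrite iter_porbit.
by rewrite -iterS; congr iter; lia.
Qed.


Lemma pdt_conj m k (s g : 'S_m) : is_prod_disj_transp k s -> is_prod_disj_transp k (s ^ g).
Proof.
case/pdt_fwd => I E; apply: pdt_bwd; last by rewrite psupp_conj.
by move=> x; rewrite -(permKV g x) !conj_ptE I.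
Qed.

Lemma transp_conj m (s g : 'S_m) : is_transp s -> is_transp (s ^ g).
Proof.
case/transpP => [[a b] /= ab ->]; rewrite tpermJ.
by apply/existsP; exists (g a); apply/existsP; exists (g b); rewrite (inj_eq perm_inj) ab eqxx.
Qed.

Lemma adm_conj n (S : tuple4 (2*n)) g : 1 <= n -> admissible S -> siginf S ^ g = sigma_inf n ->
  admissible (conj4 S g).
Proof.
move=> hn /and5P[H0 Hc H1 Ht /eqP Hp] Hs.
apply/and5P; split.
- exact: pdt_conj.
- by change (is_cycle (2*n) (siginf S ^ g)); rewrite Hs; apply: cycle_sinf.
- exact: pdt_conj.
- exact: transp_conj.
- by change (sig0 S ^ g * siginf S ^ g * sig1 S ^ g * tau S ^ g == 1); rewrite -!conjMg Hp conj1g.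
Qed.

Lemma disj_conj m (S : tuple4 m) g : disj1t S -> disj1t (conj4 S g).
Proof.
move=> Hd; have D := disj_pt Hd.
change ([disjoint psupp (sig1 S ^ g) & psupp (tau S ^ g)]).
rewrite -setI_eq0; apply/eqP/setP => x; rewrite !inE !conj_fixE.
by case/orP: (D (g^-1 x)) => ->; rewrite ?andbF.
Qed.

Lemma psupp_tperm m (a b : 'I_m) : a != b -> #|psupp (tperm a b)| = 2.
Proof.
move=> ab; have -> : psupp (tperm a b) = [set a; b].
  apply/setP => x; rewrite !inE; case: tpermP => [->|->|H1 H2].
  - by rewrite eqxx eq_sym ab.
  - by rewrite eqxx orbT ab.
  - by rewrite eqxx; apply/esym/norP; split; apply/eqP.
by rewrite cards2 ab.
Qed.

Lemma common_fix n (S : tuple4 (2*n)) : 2 <= n -> admissible S ->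
  exists p, sig1 S p = p /\ tau S p = p.
Proof.
move=> hn /and5P[_ _ H1 Ht _].
have [_ C1] := pdt_fwd H1.
have [[a b] /= ab Et] := transpP Ht.
have Ct : #|psupp (tau S)| = 2 by rewrite Et psupp_tperm.
have : 0 < #|~: (psupp (sig1 S) :|: psupp (tau S))|.
  have := cardsC (psupp (sig1 S) :|: psupp (tau S)); rewrite card_ord cardsU C1 Ct; lia.
case/card_gt0P => p; rewrite !inE negb_or !negbK => /andP[/eqP ? /eqP ?].
by exists p.
Qed.

Lemma conjugate4_trans m (S1 S2 S3 : tuple4 m) :
  conjugate4 S1 S2 -> conjugate4 S2 S3 -> conjugate4 S1 S3.
Proof.
case/existsP => g /eqP -> /existsP[h /eqP ->].
by apply/existsP; exists (g * h); rewrite conj4_comp.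
Qed.

Lemma surj1 n (S : tuple4 (2*n)) : 2 <= n -> admissible S -> disj1t S ->
  exists2 i, 1 <= i < n & conjugate4 S (Tt n i).
Proof.
move=> hn HA HD.
have [g1 Eg1] : exists g, siginf S ^ g = sigma_inf n.
  by apply: cycle_conj; case/and5P: HA.
have A1 := adm_conj (ltnW hn) HA Eg1.
have D1 := disj_conj g1 HD.
have [p [Fp1 Fp2]] := common_fix hn A1.
set S1 := conj4 S g1 in A1 D1 Fp1 Fp2.
pose h := sigma_inf n ^+ p.+1.
have hp : ((h p) : nat) = (2*n).-1 by rewrite sinf_powg; [case: ifP; lia | have := ltn_ord p; lia].
have Eh : siginf S1 ^ h = sigma_inf n.
  by change ((siginf S ^ g1) ^ h = sigma_inf n); rewrite Eg1; apply: conj_pt => y; rewrite sinf_comm.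
have A2 := adm_conj (ltnW hn) A1 Eh.
have D2 := disj_conj h D1.
have Sp2 : special (conj4 S1 h).
  apply/and3P; split; first by change (siginf S1 ^ h == sigma_inf n); rewrite Eh.
    apply/forallP => x; apply/implyP => /eqP Hx.
    have -> : x = h p by apply: ovi; rewrite hp.
    by change ((sig1 S1 ^ h) (h p) == h p); rewrite conj_ptE Fp1.
  apply/forallP => x; apply/implyP => /eqP Hx.
  have -> : x = h p by apply: ovi; rewrite hp.
  by change ((tau S1 ^ h) (h p) == h p); rewrite conj_ptE Fp2.
have [i hi Ei] := good_eq hn (introT and3P (And3 A2 Sp2 D2)).
exists i => //; rewrite -Ei /S1.
by apply/existsP; exists (g1 * h); rewrite conj4_comp.
Qed.

Lemma surj2 n (S : tuple4 (2*n)) : 2 <= n -> admissible S -> disj1t S ->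
  exists2 i, 1 <= i <= n./2 & conjugate4 S (Tt n i).
Proof.
move=> hn HA HD; have [i hi Hc] := surj1 hn HA HD.
have h2 := odd_double_half n.
case: (leqP i n./2) => Hi; first by exists i => //; lia.
exists (n - i); first by lia.
apply: (conjugate4_trans Hc); rewrite -conjT //.
by apply/existsP; exists (sigma_inf n ^+ n).
Qed.

Lemma inclass1 m (S X : tuple4 m) : X \in conj_class S -> conjugate4 S X.
Proof. move=> H; exact: (eq_rect _ is_true H _ (inclass S X)). Qed.

Lemma inclass2 m (S X : tuple4 m) : conjugate4 S X -> X \in conj_class S.
Proof. move=> H; exact: (eq_rect _ is_true H _ (esym (inclass S X))). Qed.


Lemma inA n (S : tuple4 (2*n)) :
  (S \in [set S : tuple4 (2 * n) | admissible S && disj1t S]) = admissible S && disj1t S.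
Proof. exact: (in_set (fun S : tuple4 (2*n) => admissible S && disj1t S) S). Qed.

Lemma count_classes n : 2 <= n ->
  #|[set conj_class S | S in [set S : tuple4 (2 * n) | admissible S && disj1t S]]| = n./2.
Proof.
move=> hn.
have h2 := odd_double_half n.
pose F := fun j : 'I_(n./2) => conj_class (Tt n j.+1).
have -> : [set conj_class S | S in [set S : tuple4 (2 * n) | admissible S && disj1t S]] =
          F @: [set: 'I_(n./2)].
  apply/setP => C; apply/imsetP/imsetP.
  - case=> S HS ->.
    have /andP[HA HD] := eq_rect _ is_true HS _ (inA S).
    have [i hi Hc] := surj2 hn HA HD.
    have hj : i.-1 < n./2 by lia.
    exists (Ordinal hj); first by rewrite inE.
    rewrite /F /= (class_eq Hc); congr conj_class; congr Tt; lia.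
  - case=> j _ ->; exists (Tt n j.+1); last by [].
    have hj := ltn_ord j.
    have /and3P[HA _ HD] := good_Tt hn (ltac:(lia) : 1 <= j.+1 < n).
    exact: (eq_rect _ is_true (introT andP (conj HA HD)) _ (esym (inA _))).
have Finj : injective F.
  move=> j1 j2 E.
  have hj1 := ltn_ord j1; have hj2 := ltn_ord j2.
  have hi1 : 1 <= j1.+1 < n by lia.
  have hi2 : 1 <= j2.+1 < n by lia.
  have G1 := good_Tt hn hi1.
  have G2 := good_Tt hn hi2.
  have : Tt n j2.+1 \in F j1 by rewrite E; apply: inclass2; apply: conjugate4_refl.
  move/inclass1 => Hc.
  apply: ovi.
  case: (eqVneq (Tt n j1.+1) (Tt n j2.+1)) => [Ee|Hne].
    have := taui_inj hi1 hi2 (congr1 (@tau _) Ee); lia.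
  have H0 := (part3 hn G1 G2 (elimN eqP Hne)).1 Hc.
  have E3 := conjT hn hi1.
  have := congr1 (@tau _) (etrans H0 E3) => /= /taui_inj H.
  have := H hi2 (ltac:(lia)); lia.
rewrite (card_imset _ Finj) cardsT card_ord.
done.
Qed.


Theorem mainTheorem12 (n : nat) (hn : (2 <= n)%N) :
  let P0 : 'S_(2 * n) := \prod_(1 <= i < n.+1) tpn (2 * n) i (2 * n + 1 - i) in
  let P1 : 'S_(2 * n) := \prod_(1 <= i < n) tpn (2 * n) i (2 * n - i) in
  let good (S : tuple4 (2 * n)) := [&& admissible S, special S & disj1t S] in
  (* structure of special tuples with sigma_1, tau disjoint *)
  (forall S : tuple4 (2 * n), good S ->
     [/\ sig0 S = P0, sig1 S * tau S = P1 &
         exists2 i, (1 <= i < n)%N & tau S = tpn (2 * n) i (2 * n - i)]) /\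
  (* each choice of tau gives such a special tuple *)
  (forall i, (1 <= i < n)%N ->
     good (P0, sigma_inf n, P1 * tpn (2 * n) i (2 * n - i), tpn (2 * n) i (2 * n - i))) /\
  (* distinct ones are conjugate iff exchanged by conjugation by sigma_inf^n *)
  (forall S S' : tuple4 (2 * n), good S -> good S' -> S <> S' ->
     (conjugate4 S S' <-> S' = conj4 S (sigma_inf n ^+ n))) /\
  (* that conjugation fixes the tuple exactly when n even and tau = (n/2, 3n/2) *)
  (forall S : tuple4 (2 * n), good S ->
     (conj4 S (sigma_inf n ^+ n) = S <->
      ~~ odd n /\ tau S = tpn (2 * n) n./2 (3 * n./2))) /\
  (* number of conjugacy classes of admissible tuples with sigma_1, tau disjoint *)
  #|[set conj_class S | S in [set S : tuple4 (2 * n) | admissible S && disj1t S]]| = n./2.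
Proof.
move=> P0 P1 good.
split.
  move=> S /and3P[Ha Hs Hd]; exact: (good_struct hn Ha Hs Hd).
split.
  move=> i hi; exact: (good_Tt hn hi).
split.
  move=> S S' GS GS' Hne; exact: (part3 hn GS GS' Hne).
split.
  move=> S GS; exact: (part4 hn GS).
exact: (count_classes hn).
Qed.
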